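(* Let $\mathbb{F}$ be an infinite field with $\operatorname{char}(\mathbb{F})\neq 2$, let $G$ be a group with a group involution $\ast$, extended $\mathbb{F}$-linearly to $\mathbb{F}G$. Suppose that $\mathbb{F}G$ is normal with respect to $\ast$. Then $G^+\subseteq\zeta(G)$. In particular, $gg^\ast=g^\ast g\in\zeta(G)$ for all $g\in G$.
   Context: A group involution on $G$ is a map $\ast:G\to G$ with $(gh)^\ast=h^\ast g^\ast$ and $(g^\ast)^\ast=g$ for all $g,h\in G$; it is extended $\mathbb{F}$-linearly to an algebra involution of $\mathbb{F}G$. The algebra $\mathbb{F}G$ is normal (with respect to $\ast$) if $\alpha\alpha^\ast=\alpha^\ast\alpha$ for all $\alpha\in\mathbb{F}G$. $G^+=\{g\in G: g^\ast=g\}$, and $\zeta(G)$ is the center of $G$. *)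

(* Defs.v *)
From mathcomp Require Import all_boot all_order all_algebra.
Set Implicit Arguments. Unset Strict Implicit. Unset Printing Implicit Defensive.
Import GRing.Theory.
Local Open Scope ring_scope.

Definition is_group (G : eqType) (mul : G -> G -> G) (one : G) (inv : G -> G) :=
  [/\ (forall x y z, mul x (mul y z) = mul (mul x y) z),
      (forall x, mul one x = x), (forall x, mul x one = x)
    & (forall x, mul (inv x) x = one)].

Definition is_group_involution (G : eqType) (mul : G -> G -> G) (star : G -> G) :=
  (forall g h, star (mul g h) = mul (star h) (star g)) /\
  (forall g, star (star g) = g).

(* The group algebra FG: an element is represented by a formal finite sum
   \sum a_i g_i given as a list of pairs (a_i, g_i); two representations
   denote the same element iff all coefficients agree. *)
Definition gaelt (F : fieldType) (G : eqType) := seq (F * G).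

Definition ga_coef (F : fieldType) (G : eqType) (a : gaelt F G) (x : G) : F :=
  \sum_(p <- a | p.2 == x) p.1.

Definition ga_eq (F : fieldType) (G : eqType) (a b : gaelt F G) : Prop :=
  forall x, ga_coef a x = ga_coef b x.

Definition ga_mul (F : fieldType) (G : eqType) (mul : G -> G -> G)
  (a b : gaelt F G) : gaelt F G :=
  [seq (p.1 * q.1, mul p.2 q.2) | p <- a, q <- b].

Definition ga_star (F : fieldType) (G : eqType) (star : G -> G)
  (a : gaelt F G) : gaelt F G := [seq (p.1, star p.2) | p <- a].

Definition ga_normal (F : fieldType) (G : eqType) (mul : G -> G -> G)
  (star : G -> G) : Prop :=
  forall a : gaelt F G,
    ga_eq (ga_mul mul a (ga_star star a)) (ga_mul mul (ga_star star a) a).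

Definition infinite_type (T : eqType) : Prop := forall s : seq T, exists x, x \notin s.

(* Main.v *)
Require Import Defs.
From mathcomp Require Import all_boot all_order all_algebra.
Local Open Scope ring_scope.
Import GRing.Theory.

Lemma coef_cons (F : fieldType) (G : eqType) (p : F * G) s y :
  ga_coef (p :: s) y = (if p.2 == y then p.1 else 0) + ga_coef s y.
Proof. by rewrite /ga_coef big_cons; case: eqP => _ //; rewrite add0r. Qed.

Lemma coef_nil (F : fieldType) (G : eqType) y : ga_coef ([::] : gaelt F G) y = 0.
Proof. by rewrite /ga_coef big_nil. Qed.

Definition ind (F : fieldType) {G : eqType} (x y : G) : F := if x == y then 1 else 0.

Lemma norm1 (F : fieldType) (G : eqType) (mul : G -> G -> G) (star : G -> G) (x y : G) :
  ga_normal F mul star -> ind F (mul x (star x)) y = ind F (mul (star x) x) y.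
Proof.
move=> hN; have := hN [:: (1, x)] y.
by rewrite /ga_mul /ga_star /= !coef_cons coef_nil /ind /= !mulr1 !addr0.
Qed.

Lemma norm2 (F : fieldType) (G : eqType) (mul : G -> G -> G) (star : G -> G) (g x y : G) :
  ga_normal F mul star ->
  ind F (mul g (star x)) y + ind F (mul x (star g)) y =
  ind F (mul (star g) x) y + ind F (mul (star x) g) y.
Proof.
move=> hN; have := hN [:: (1, g); (1, x)] y.
rewrite /ga_mul /ga_star /= !coef_cons coef_nil /= !mulr1 !addr0.
have e1 := norm1 F G mul star g y hN; have e2 := norm1 F G mul star x y hN; move: e1 e2; rewrite /ind.
move=> -> ->; move/addrI; rewrite !addrA; by move/addIr.
Qed.

Lemma contra01 (F : fieldType) (b : bool) :
  ~~ (2%N \in [pchar F]) -> (0:F) + 0 = 1 + (if b then 1 else 0) -> False.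
Proof.
move=> hch; rewrite addr0; case: b => [|]; last by rewrite addr0 => /esym/eqP; rewrite oner_eq0.
move=> e; move: hch; rewrite inE /= -[2%:R]/(1 + 1 : F) -e eqxx.
by [].
Qed.

Theorem lemma5 (F : fieldType) (G : eqType) (mul : G -> G -> G) (one : G)
  (inv : G -> G) (star : G -> G) :
  infinite_type F -> ~~ (2%N \in [pchar F]) ->
  is_group mul one inv -> is_group_involution mul star ->
  ga_normal F mul star ->
  (forall g, star g = g -> forall h, mul g h = mul h g) /\
  (forall g, mul g (star g) = mul (star g) g /\
             forall h, mul (mul g (star g)) h = mul h (mul g (star g))).
Proof.
move=> _ hch [hA h1l h1r hinv] [hsM hss] hN.
have lc : forall a b c, mul a b = mul a c -> b = c.
  by move=> a b c e; rewrite -(h1l b) -(h1l c) -(hinv a) -!hA e.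
have part1 : forall g, star g = g -> forall h, mul g h = mul h g.
  move=> g hg h; case: (mul g h =P mul h g) => // ne; exfalso.
  have E x y : ind F (mul g (star x)) y + ind F (mul x g) y
             = ind F (mul g x) y + ind F (mul (star x) g) y.
    by have := norm2 F G mul star g x y hN; rewrite hg.
  have hh : star h = h.
    case: (star h =P h) => // nh; exfalso.
    have f1 : (mul g (star h) == mul g h) = false by apply/eqP => /lc.
    have f2 : (mul h g == mul g h) = false by apply/eqP => /esym.
    by have := E h (mul g h); rewrite /ind f1 f2 eqxx; apply: contra01.
  have f1 : (mul g (star (mul g h)) == mul g (mul g h)) = false.
    by rewrite hsM hh hg; apply/eqP => /lc /esym.
  have f2 : (mul (mul g h) g == mul g (mul g h)) = false.
    by rewrite -hA; apply/eqP => /lc /esym.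
  by have := E (mul g h) (mul g (mul g h)); rewrite /ind f1 f2 eqxx; apply: contra01.
split => // g.
have e : mul g (star g) = mul (star g) g.
  have := norm1 F G mul star g (mul g (star g)) hN; rewrite /ind eqxx.
  case: eqP => [-> //|_] /eqP; by rewrite oner_eq0.
split => // h; apply: part1; by rewrite hsM hss.
Qed.
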